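(* There exists a ${}^{2}\mathrm{cDCQS}(2^{9}:2)$.
   Context: For $v\equiv 1,3\pmod 6$, $\chi'(v)$ denotes the minimum over all Steiner triple systems $\mathrm{STS}(v)$ of the least number of partial parallel classes into which its block set can be partitioned. A partial parallel class (PPC) of a set $Y$ is a set of pairwise disjoint blocks contained in $Y$; a parallel class (PC) of $Y$ is a PPC whose union is $Y$. An incomplete STS $\mathrm{STS}(v,h)$ is $(Y,H,\mathcal{B})$ with $|Y|=v$, $H\subseteq Y$, $|H|=h$, $\mathcal{B}$ a set of $3$-subsets such that each pair of $Y$ not inside $H$ lies in exactly one block and no pair inside $H$ lies in a block; it is good colorable ($\mathrm{gcSTS}(v,h)$) if $\mathcal{B}$ can be partitioned into $\chi'(v)$ PPCs of $Y$ of which $\chi'(v)-\frac{v-h}{2}$ are PPCs of $Y\setminus H$. A $\mathrm{GDD}(2,3,gn)$ of type $g^n$ is $(Z,\mathcal{G},\mathcal{B})$ with $\mathcal{G}$ a partition of $Z$ into $n$ groups of size $g$ and $\mathcal{B}$ a set of $3$-subsets each meeting every group in at most one point such that each pair of points from distinct groups lies in exactly one block; it is resolvable ($\mathrm{RGDD}$) if $\mathcal{B}$ partitions into PCs of $Z$. A $\mathrm{CQS}(g^n:s)$ is $(X,S,\mathcal{G},\mathcal{A})$ with $S\subseteq X$, $|S|=s$, $\mathcal{G}$ a partition of $X\setminus S$ into $n$ groups of size $g$, $\mathcal{A}$ a set of $4$-subsets of $X$ such that every $3$-subset of $X$ not contained in any $S\cup G$ ($G\in\mathcal{G}$) lies in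 exactly one block and no $3$-subset of any $S\cup G$ lies in a block. Let $\mathcal{A}_x=\{A\setminus\{x\}:x\in A\in\mathcal{A}\}$. A ${}^{2}\mathrm{cDCQS}(g^n:2)$ is a $\mathrm{CQS}(g^n:2)$ such that (1) for each $x\in G\in\mathcal{G}$, $(X\setminus\{x\},(G\cup S)\setminus\{x\},\mathcal{A}_x)$ is a $\mathrm{gcSTS}(gn+1,g+1)$; (2) for each $x\in S$, $(X\setminus S,\mathcal{G},\mathcal{A}_x)$ is an $\mathrm{RGDD}(2,3,gn)$ of type $g^n$. *)

(* Defs.v *)
From mathcomp Require Import all_boot.
Set Implicit Arguments. Unset Strict Implicit. Unset Printing Implicit Defensive.

Section Designs.
Variable T : finType.

Definition PPC (Y : {set T}) (C : {set {set T}}) : Prop :=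
  (forall B, B \in C -> B \subset Y) /\
  (forall B1 B2, B1 \in C -> B2 \in C -> B1 != B2 -> [disjoint B1 & B2]).

Definition PC (Y : {set T}) (C : {set {set T}}) : Prop :=
  PPC Y C /\ cover C = Y.

(* Incomplete STS(v,h) (Y,H,Bs) with v = #|Y|, h = #|H|. *)
Definition ISTS (Y H : {set T}) (Bs : {set {set T}}) : Prop :=
  H \subset Y /\
  (forall B, B \in Bs -> B \subset Y /\ #|B| = 3) /\
  (forall a b, a \in Y -> b \in Y -> a != b ->
     #|[set B in Bs | (a \in B) && (b \in B)]| =
       (if (a \in H) && (b \in H) then 0 else 1)).

Definition STS (Y : {set T}) (Bs : {set {set T}}) : Prop := ISTS Y set0 Bs.

Definition colorable (Y : {set T}) (Bs : {set {set T}}) (k : nat) : Prop :=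
  exists P : {set {set {set T}}},
    partition P Bs /\ #|P| = k /\ (forall C, C \in P -> PPC Y C).

Definition GDD (Z : {set T}) (Gs : {set {set T}}) (Bs : {set {set T}})
    (g n : nat) : Prop :=
  partition Gs Z /\ #|Gs| = n /\ (forall G, G \in Gs -> #|G| = g) /\
  (forall B, B \in Bs -> B \subset Z /\ #|B| = 3 /\
      forall G, G \in Gs -> #|B :&: G| <= 1) /\
  (forall a b, a \in Z -> b \in Z -> a != b ->
     ~~ [exists G in Gs, (a \in G) && (b \in G)] ->
     #|[set B in Bs | (a \in B) && (b \in B)]| = 1).

Definition RGDD (Z : {set T}) (Gs : {set {set T}}) (Bs : {set {set T}})
    (g n : nat) : Prop :=
  GDD Z Gs Bs g n /\
  exists P : {set {set {set T}}},
    partition P Bs /\ (forall C, C \in P -> PC Z C).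

Definition derived (A : {set {set T}}) (x : T) : {set {set T}} :=
  [set B :\ x | B in A & x \in B].

(* CQS(g^n : s) on the whole type T, with point set X = [set: T]. *)
Definition CQS (g n s : nat) (S : {set T}) (Gs : {set {set T}})
    (A : {set {set T}}) : Prop :=
  #|S| = s /\ partition Gs (~: S) /\ #|Gs| = n /\
  (forall G, G \in Gs -> #|G| = g) /\
  (forall B, B \in A -> #|B| = 4) /\
  (forall t : {set T}, #|t| = 3 ->
     if [exists G in Gs, t \subset S :|: G]
     then #|[set B in A | t \subset B]| = 0
     else #|[set B in A | t \subset B]| = 1).

End Designs.

Definition is_chi' (v k : nat) : Prop :=
  (exists Bs : {set {set 'I_v}}, STS [set: 'I_v] Bs /\ colorable [set: 'I_v] Bs k) /\
  (forall (Bs : {set {set 'I_v}}) (m : nat),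
      STS [set: 'I_v] Bs -> colorable [set: 'I_v] Bs m -> k <= m).

(* good colorable incomplete STS(v,h), v = #|Y|, h = #|H|. *)
Definition gcSTS (T : finType) (Y H : {set T}) (Bs : {set {set T}}) : Prop :=
  ISTS Y H Bs /\
  exists k, is_chi' #|Y| k /\
    exists P : {set {set {set T}}},
      partition P Bs /\ #|P| = k /\ (forall C, C \in P -> PPC Y C) /\
      exists Q : {set {set {set T}}},
        Q \subset P /\ #|Q| = k - (#|Y| - #|H|) %/ 2 /\
        (forall C, C \in Q -> PPC (Y :\: H) C).

Definition cDCQS2 (T : finType) (g n : nat) (S : {set T}) (Gs : {set {set T}})
    (A : {set {set T}}) : Prop :=
  CQS g n 2 S Gs A /\
  (forall G x, G \in Gs -> x \in G ->
     gcSTS ([set: T] :\ x) ((G :|: S) :\ x) (derived A x)) /\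
  (forall x, x \in S -> RGDD (~: S) Gs (derived A x) g n).

(* Main.v *)
Require Import Defs.
From mathcomp Require Import all_boot.
From mathcomp Require Import zify.
Set Implicit Arguments. Unset Strict Implicit. Unset Printing Implicit Defensive.

Section Basic.
Variable U : finType.
Implicit Types (s : seq U).

Lemma big_setseq (R : Type) (idx : R) (op : Monoid.com_law idx) s (F : U -> R) :
  uniq s -> \big[op/idx]_(i in [set:: s]) F i = \big[op/idx]_(i <- s) F i.
Proof.
move=> us; rewrite (big_uniq s us); apply: eq_bigl => i; by rewrite inE.
Qed.

Lemma card_setseq s : uniq s -> #|[set:: s]| = size s.
Proof. by move=> us; rewrite cardsE; apply/card_uniqP. Qed.

Lemma card_sep s (P : pred U) : uniq s ->
  #|[set B in [set:: s] | P B]| = count P s.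
Proof.
move=> us.
have -> : [set B in [set:: s] | P B] = [set:: filter P s].
  by apply/setP => B; rewrite !inE mem_filter andbC.
by rewrite card_setseq ?size_filter // filter_uniq.
Qed.

Lemma exists_setseq s (P : pred U) :
  [exists G in [set:: s], P G] = has P s.
Proof.
apply/existsP/hasP => [[G /andP [] ]|[G]].
  by rewrite inE => H1 H2; exists G.
by move=> H1 H2; exists G; rewrite inE H1.
Qed.

Lemma forall_setseq s (P : U -> Prop) :
  (forall B, B \in s -> P B) -> forall B, B \in [set:: s] -> P B.
Proof. by move=> H B; rewrite inE; apply: H. Qed.

End Basic.

Section Gen.
Variable T : finType.
Implicit Types (s : seq {set T}) (D : {set T}).

Lemma partition_seq s D : uniq s ->
  \big[@setU T/set0]_(B <- s) B == D -> \sum_(B <- s) #|B| == #|D| ->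
  set0 \notin s -> partition [set:: s] D.
Proof.
move=> us h1 h2 h3.
have hc : cover [set:: s] = D by rewrite /cover big_setseq // (eqP h1).
apply/and3P; split.
- by rewrite hc.
- by rewrite /trivIset hc big_setseq.
- by rewrite inE.
Qed.

Lemma uflat_disj (X : eqType) (ss : seq (seq X)) c1 c2 y :
  uniq (flatten ss) -> c1 \in ss -> c2 \in ss -> y \in c1 -> y \in c2 -> c1 = c2.
Proof.
elim: ss => [//|c ss IH] /=; rewrite cat_uniq => /and3P [_ hd uf].
rewrite !inE => /orP [/eqP e1|i1] /orP [/eqP e2|i2] y1 y2.
- by rewrite e1 e2.
- exfalso; move/negP: hd; apply; apply/hasP; exists y; last by rewrite -e1.
  by apply/flattenP; exists c2.
- exfalso; move/negP: hd; apply; apply/hasP; exists y; last by rewrite -e2.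
  by apply/flattenP; exists c1.
- exact: IH.
Qed.

Lemma uflat_uniq (X : eqType) (ss : seq (seq X)) :
  uniq (flatten ss) -> all (fun c => c != [::]) ss -> uniq ss.
Proof.
elim: ss => [//|c ss IH] /=; rewrite cat_uniq => /and3P [_ hd uf] /andP [hc ha].
rewrite IH // andbT; apply/negP => ic.
case: c hc hd ic => [//|y c] _ hd ic.
move/negP: hd; apply; apply/hasP; exists y; last by rewrite inE eqxx.
by apply/flattenP; exists (y :: c) => //; rewrite inE eqxx.
Qed.

Definition PPCb (Y : {set T}) (c : seq {set T}) : bool :=
  all (fun B : {set T} => B \subset Y) c &&
  all (fun B1 : {set T} => all (fun B2 : {set T} => (B1 == B2) || [disjoint B1 & B2]) c) c.

Lemma PPCbP Y c : PPCb Y c -> PPC Y [set:: c].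
Proof.
case/andP => /allP h1 /allP h2; split.
  by move=> B; rewrite inE => /h1.
move=> B1 B2; rewrite !inE => i1 i2 ne.
by move: (allP (h2 _ i1) _ i2); rewrite (negbTE ne).
Qed.

Definition clsets (cls : seq (seq {set T})) : {set {set {set T}}} :=
  [set:: map (fun c => [set:: c]) cls].

Lemma partition_cls (cls : seq (seq {set T})) (bs : seq {set T}) :
  uniq (flatten cls) -> perm_eq (flatten cls) bs -> all (fun c => c != [::]) cls ->
  partition (clsets cls) [set:: bs] /\ #|clsets cls| = size cls.
Proof.
move=> uf pe ne.
have inj : {in cls &, injective (fun c => [set:: c])}.
  move=> c1 c2 i1 i2 e.
  have := allP ne _ i1; case: c1 i1 e => [//|y c1] i1 e _.
  apply: (uflat_disj (y:=y) uf i1 i2); first by rewrite inE eqxx.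
  have : y \in [set:: y :: c1] by rewrite inE inE eqxx.
  by rewrite e inE.
have um : uniq (map (fun c => [set:: c]) cls).
  by rewrite (map_inj_in_uniq inj); apply: uflat_uniq.
split; last by rewrite /clsets (card_setseq um) size_map.
apply/and3P; split.
- apply/eqP/setP => B; apply/bigcupP/idP => [[C]|].
    rewrite inE => /mapP [c ic ->]; rewrite !inE => ib.
    by rewrite -(perm_mem pe); apply/flattenP; exists c.
  rewrite inE -(perm_mem pe) => /flattenP [c ic ib].
  by exists [set:: c]; rewrite !inE // map_f.
- apply/trivIsetP => C1 C2; rewrite !inE => /mapP [c1 i1 ->] /mapP [c2 i2 ->] neq.
  rewrite disjoint_subset; apply/subsetP => y; rewrite !inE => y1.
  apply/negP => y2; move/negP: neq; apply; apply/eqP.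
  by rewrite (uflat_disj uf i1 i2 y1 y2).
- rewrite inE; apply/negP => /mapP [c ic] /esym e.
  have := allP ne _ ic; case: c ic e => [//|y c] ic e _.
  have : y \in [set:: y :: c] by rewrite inE inE eqxx.
  by rewrite e inE.
Qed.

Lemma PC_of Y c : uniq c -> PPCb Y c -> \big[@setU T/set0]_(B <- c) B == Y ->
  PC Y [set:: c].
Proof.
move=> uc hp hc; split; first exact: PPCbP.
by rewrite /cover big_setseq // (eqP hc).
Qed.

End Gen.

Section LB.
Variable T : finType.

Lemma sum_bool_card (P : pred T) (p : pred T) :
  \sum_(i | P i) (p i : nat) = #|[set i | P i && p i]|.
Proof.
rewrite -sum1dep_card big_mkcondr; apply: eq_bigr => i _; by case: (p i).
Qed.

Lemma card_sep_sum (Bs : {set {set T}}) (p : pred {set T}) :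
  #|[set B in Bs | p B]| = \sum_(B in Bs) (p B : nat).
Proof.
rewrite -sum1dep_card big_mkcondr; apply: eq_bigr => B _.
by case: (p B).
Qed.

Lemma sts_card (Bs : {set {set T}}) : STS [set: T] Bs -> #|Bs| * 6 = #|T| * #|T|.-1.
Proof.
case=> _ [hb hp].
have e1 : \sum_a \sum_(b | b != a) #|[set B in Bs | (a \in B) && (b \in B)]| = #|T| * #|T|.-1.
  rewrite -sum_nat_const; apply: eq_bigr => a _.
  rewrite (eq_bigr (fun _ => 1)); last first.
    by move=> b hb'; rewrite hp ?inE // eq_sym.
  rewrite sum1dep_card.
  have := cardsD1 a [set: T]; rewrite inE cardsT add1n => ->.
  by apply: eq_card => b; rewrite !inE andbT.
rewrite -e1.
rewrite (eq_bigr (fun a => \sum_(b | b != a) \sum_(B in Bs) ((a \in B) && (b \in B) : nat))); last first.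
  by move=> a _; apply: eq_bigr => b _; rewrite card_sep_sum.
rewrite (eq_bigr (fun a => \sum_(B in Bs) \sum_(b | b != a) ((a \in B) && (b \in B) : nat))); last first.
  by move=> a _; rewrite exchange_big.
rewrite exchange_big /= -sum_nat_const; apply: eq_bigr => B hB.
have [_ h3] := hb B hB.
rewrite (eq_bigr (fun a => if a \in B then 2 else 0)); last first.
  move=> a _; case aB: (a \in B) => /=; last by rewrite big1.
  rewrite sum_bool_card.
  have := cardsD1 a B; rewrite aB h3 add1n => /eqP; rewrite eqSS => /eqP ->.
  by apply: eq_card => b; rewrite !inE andbC.
rewrite -big_mkcond /= sum_nat_const h3 //.
Qed.

Lemma ppc_card (Y : {set T}) (C : {set {set T}}) :
  PPC Y C -> (forall B, B \in C -> #|B| = 3) -> #|C| * 3 <= #|Y|.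
Proof.
case=> hs hd h3.
have tC : trivIset C by apply/trivIsetP => A B hA hB ne; exact: hd.
have : \sum_(B in C) #|B| = #|cover C| by apply/eqP.
rewrite (eq_bigr (fun _ => 3)) ?sum_nat_const => [->|B hB]; last exact: h3.
apply: subset_leq_card; apply/subsetP => x /bigcupP [B hB xB].
by apply: (subsetP (hs B hB)).
Qed.

Lemma colorable_lb (Bs : {set {set T}}) m :
  STS [set: T] Bs -> colorable [set: T] Bs m -> #|Bs| <= m * (#|T| %/ 3).
Proof.
move=> hS [P [hP [hm hc]]].
have [_ [hb _]] := hS.
rewrite (card_partition hP) -hm -sum_nat_const; apply: leq_sum => C hC.
have sub : C \subset Bs.
  rewrite -(cover_partition hP); apply/subsetP => B hB; apply/bigcupP; by exists C.
have := ppc_card (hc C hC) (fun B hB => (hb B (subsetP sub B hB)).2).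
rewrite cardsT => h; rewrite leq_divRL //.
Qed.

End LB.

Lemma chi19_lb (Bs : {set {set 'I_19}}) m :
  STS [set: 'I_19] Bs -> colorable [set: 'I_19] Bs m -> 10 <= m.
Proof.
move=> hS hc; have := colorable_lb hS hc; have := sts_card hS.
rewrite card_ord /= => e h.
have e6 : 19 %/ 3 = 6 by [].
rewrite e6 in h.
lia.
Qed.

Section Conc.
Variable n : nat.
Definition mk (l : seq nat) : {set 'I_n} := [set i : 'I_n | nat_of_ord i \in l].

Lemma ordE (a b : 'I_n) : (nat_of_ord a == nat_of_ord b) = (a == b).
Proof. by []. Qed.

Lemma in_mk l (i : 'I_n) : (i \in mk l) = (nat_of_ord i \in l).
Proof. by rewrite inE. Qed.

Lemma setT_mk : [set: 'I_n] = mk (iota 0 n).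
Proof. by apply/setP => i; rewrite !inE mem_iota /= add0n ltn_ord. Qed.

Lemma setD1_mk l (x : 'I_n) : mk l :\ x = mk (filter (fun y => y != nat_of_ord x) l).
Proof. by apply/setP => i; rewrite !inE mem_filter -ordE. Qed.

Lemma setU_mk l1 l2 : mk l1 :|: mk l2 = mk (l1 ++ l2).
Proof. by apply/setP => i; rewrite !inE mem_cat. Qed.

Lemma setI_mk l1 l2 : mk l1 :&: mk l2 = mk (filter (fun y => y \in l2) l1).
Proof. by apply/setP => i; rewrite !inE mem_filter andbC. Qed.

Lemma setD_mk l1 l2 : mk l1 :\: mk l2 = mk (filter (fun y => y \notin l2) l1).
Proof. by apply/setP => i; rewrite !inE mem_filter. Qed.

Lemma setC_mk l : ~: mk l = mk (filter (fun y => y \notin l) (iota 0 n)).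
Proof. by apply/setP => i; rewrite !inE mem_filter mem_iota /= add0n ltn_ord andbT. Qed.

Lemma card_mk l : #|mk l| = count (fun y => y \in l) (iota 0 n).
Proof.
rewrite cardE /enum_mem size_filter -val_enum_ord count_map.
rewrite -?enumT; apply: eq_count => i; by rewrite /= !inE.
Qed.

Lemma sub_mk l1 l2 : all (fun y => y \in l2) l1 -> mk l1 \subset mk l2.
Proof. move=> /allP h; apply/subsetP => i; rewrite !inE; exact: h. Qed.

Lemma disj_mk l1 l2 : ~~ has (fun y => y \in l2) l1 -> [disjoint mk l1 & mk l2].
Proof.
move=> h; rewrite disjoint_subset; apply/subsetP => i; rewrite !inE => i1.
by apply/negP => i2; move/negP: h; apply; apply/hasP; exists (nat_of_ord i).
Qed.

Lemma eq_mk l1 l2 : all (fun i => (i \in l1) == (i \in l2)) (iota 0 n) -> mk l1 = mk l2.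
Proof.
move=> /allP h; apply/setP => i; rewrite !inE; apply/eqP; apply: h.
by rewrite mem_iota /= add0n ltn_ord.
Qed.

Definition dist_ok (s : seq (seq nat)) :=
  all (fun l1 : seq nat => all (fun l2 : seq nat => (l1 == l2) ||
        has (fun y => (y < n) && ((y \in l1) != (y \in l2))) (l1 ++ l2)) s) s.

Lemma uniq_mk s : uniq s -> dist_ok s -> uniq (map mk s).
Proof.
move=> us /allP hd.
have inj : {in s &, injective mk}; last by rewrite map_inj_in_uniq.
move=> l1 l2 i1 i2 e.
have := allP (hd _ i1) _ i2; case/orP => [/eqP //|/hasP [y _ /andP [yn]]].
have : (Ordinal yn \in mk l1) = (Ordinal yn \in mk l2) by rewrite e.
by rewrite !inE /= => ->; rewrite eqxx.
Qed.

Lemma bigU_mk (c : seq (seq nat)) : \big[@setU _/set0]_(B <- map mk c) B = mk (flatten c).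
Proof.
elim: c => [|l c IH]; first by rewrite big_nil; apply/setP => i; rewrite !inE.
by rewrite big_cons IH setU_mk.
Qed.

Lemma mk_neq0 l : has (fun y => y < n) l -> mk l != set0.
Proof.
case/hasP => y yl yn; apply/set0Pn; exists (Ordinal yn); by rewrite inE.
Qed.

Lemma sub3_mk (a b c : 'I_n) l :
  ([set a; b; c] \subset mk l) = [&& nat_of_ord a \in l, nat_of_ord b \in l & nat_of_ord c \in l].
Proof. by rewrite !subUset !sub1set !in_mk andbA. Qed.

Lemma card3_set (t : {set 'I_n}) : #|t| = 3 ->
  exists a b c, [/\ a != b, a != c, b != c & t = [set a; b; c]].
Proof.
move=> h; have e := set_enum t; have u := enum_uniq (mem t).
have : size (enum t) = 3 by rewrite -cardE.
move: e u; case: (enum t) => [|a [|b [|c [|]]]] //= e u _.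
exists a, b, c; move: u; rewrite !inE !negb_or => /and3P [/andP [h1 h2] h3 _].
split => //; rewrite -e; apply/setP => y; by rewrite !inE orbA.
Qed.

Definition PPCn (Yl : seq nat) (c : seq (seq nat)) : bool :=
  all (fun l => all (fun y => y \in Yl) l) c &&
  all (fun l1 : seq nat => all (fun l2 : seq nat => (l1 == l2) || ~~ has (fun y => y \in l2) l1) c) c.

Lemma PPCn_b Yl c : PPCn Yl c -> PPCb (mk Yl) (map mk c).
Proof.
case/andP => /allP h1 /allP h2; apply/andP; split.
  by apply/allP => B /mapP [l hl ->]; apply: sub_mk; apply: h1.
apply/allP => B1 /mapP [l1 i1 ->]; apply/allP => B2 /mapP [l2 i2 ->].
case/orP: (allP (h2 _ i1) _ i2) => [/eqP -> |d]; first by rewrite eqxx.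
by rewrite disj_mk ?orbT.
Qed.

Lemma PPCn_ok Yl c : PPCn Yl c -> PPC (mk Yl) [set:: map mk c].
Proof. by move=> h; apply: PPCbP; apply: PPCn_b. Qed.

End Conc.

Section Chk.
Variable n : nat.
Local Notation mk := (mk n).

Lemma iota_ord (i : 'I_n) : nat_of_ord i \in iota 0 n.
Proof. by rewrite mem_iota /= add0n ltn_ord. Qed.

Definition allpairs_ok (P : nat -> nat -> bool) :=
  all (fun a => all (fun b => P a b) (iota 0 n)) (iota 0 n).

Lemma allpairs_okP P : allpairs_ok P -> forall a b : 'I_n, P (nat_of_ord a) (nat_of_ord b).
Proof. move=> /allP h a b; exact: (allP (h _ (iota_ord a)) _ (iota_ord b)). Qed.

Definition ists_ok (Yl Hl : seq nat) (dl : seq (seq nat)) : bool :=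
  [&& all (fun y => y \in Yl) Hl, uniq dl, dist_ok n dl,
      all (fun l => all (fun y => y \in Yl) l && (count (fun y => y \in l) (iota 0 n) == 3)) dl &
      allpairs_ok (fun a b => (a \in Yl) ==> (b \in Yl) ==> (a != b) ==>
        (count (fun l => (a \in l) && (b \in l)) dl == if (a \in Hl) && (b \in Hl) then 0 else 1))].

Lemma ists_okP Yl Hl dl : ists_ok Yl Hl dl -> ISTS (mk Yl) (mk Hl) [set:: map mk dl].
Proof.
case/and5P => h1 h2 h3 /allP h4 h5; split; first exact: sub_mk.
split.
  move=> B; rewrite inE => /mapP [l hl ->]; case/andP: (h4 l hl) => a1 a2.
  by split; [apply: sub_mk | rewrite card_mk (eqP a2)].
move=> a b; rewrite !in_mk => ha hb ne.
rewrite card_sep ?uniq_mk // count_map.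
have := allpairs_okP h5 a b; rewrite ha hb ordE ne /= => /eqP <-.
by apply: eq_count => l /=; rewrite !in_mk.
Qed.

Definition col_ok (Yl : seq nat) dl (cls : seq (seq (seq nat))) :=
  [&& uniq dl, dist_ok n dl, perm_eq (flatten cls) dl, all (fun c => c != [::]) cls &
      all (PPCn Yl) cls].

Lemma col_okP Yl dl cls : col_ok Yl dl cls ->
  exists P, [/\ partition P [set:: map mk dl], #|P| = size cls,
    (forall C, C \in P -> PPC (mk Yl) C) & P = clsets (map (map mk) cls)].
Proof.
case/and5P => h1 h2 h3 h4 h5.
set cls' := map (map mk) cls.
have uf : uniq (flatten cls').
  by rewrite /cls' -map_flatten (perm_uniq (perm_map mk h3)) uniq_mk.
have pe : perm_eq (flatten cls') (map mk dl) by rewrite /cls' -map_flatten perm_map.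
have ne' : all (fun c => c != [::]) cls'.
  by rewrite all_map; apply: sub_all h4 => c /=; case: c.
have [hpart hcard] := partition_cls uf pe ne'.
exists (clsets cls'); split => //; first by rewrite hcard size_map.
move=> C; rewrite inE => /mapP [c /mapP [c0 hc0 ->] ->]; apply: PPCn_ok.
exact: (allP h5 _ hc0).
Qed.

Lemma gc_okP Yl Hl dl cls :
  is_chi' #|mk Yl| (size cls) -> ists_ok Yl Hl dl -> col_ok Yl dl cls ->
  all (PPCn (filter (fun y => y \notin Hl) Yl)) (take 2 cls) -> 2 <= size cls ->
  size cls - (#|mk Yl| - #|mk Hl|) %/ 2 = 2 ->
  gcSTS (mk Yl) (mk Hl) [set:: map mk dl].
Proof.
move=> hchi hI hC hQ h2 hk.
split; first exact: ists_okP.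
exists (size cls); split => //.
have [P [hp hcP hpp eP]] := col_okP hC.
exists P; split => //; split => //; split => //.
set cls' := map (map mk) cls.
case/and5P: hC => h1 h2' h3 h4 h5.
have uf : uniq (flatten cls').
  by rewrite /cls' -map_flatten (perm_uniq (perm_map mk h3)) uniq_mk.
have ne' : all (fun c => c != [::]) cls'.
  by rewrite all_map; apply: sub_all h4 => c /=; case: c.
have uf2 : uniq (flatten (take 2 cls')).
  by move: uf; rewrite -{1}(cat_take_drop 2 cls') flatten_cat cat_uniq => /and3P [].
have ne2 : all (fun c => c != [::]) (take 2 cls').
  by move: ne'; rewrite -{1}(cat_take_drop 2 cls') all_cat => /andP [].
have [_ hc2] := partition_cls uf2 (perm_refl _) ne2.
exists (clsets (take 2 cls')); split.
  rewrite eP; apply/subsetP => C; rewrite !inE => /mapP [c hc ->]; apply/mapP; exists c => //.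
  exact: mem_take hc.
split.
  rewrite hc2 hk size_take size_map; case: (ltnP 2 (size cls)) => // h; apply/eqP; by rewrite eqn_leq h h2.
move=> C; rewrite inE => /mapP [c hc ->].
rewrite /cls' -map_take in hc; case/mapP: hc => c0 hc0 ->.
rewrite setD_mk; apply: PPCn_ok; exact: (allP hQ _ hc0).
Qed.

Lemma colorable_okP Yl dl cls : col_ok Yl dl cls ->
  colorable (mk Yl) [set:: map mk dl] (size cls).
Proof. by case/col_okP => P [h1 h2 h3 _]; exists P. Qed.

Definition gdd_ok (Zl : seq nat) (gsl dl : seq (seq nat)) (cls : seq (seq (seq nat))) :=
  [&& uniq dl, dist_ok n dl,
   all (fun l : seq nat => [&& all (fun y => y \in Zl) l, count (fun y => y \in l) (iota 0 n) == 3 &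
        all (fun g : seq nat => count (fun y => (y \in l) && (y \in g)) (iota 0 n) <= 1) gsl]) dl,
   allpairs_ok (fun a b => (a \in Zl) ==> (b \in Zl) ==> (a != b) ==>
        has (fun g : seq nat => (a \in g) && (b \in g)) gsl ||
        (count (fun l : seq nat => (a \in l) && (b \in l)) dl == 1)),
   perm_eq (flatten cls) dl, all (fun c => c != [::]) cls &
   all (fun c => [&& PPCn Zl c, all (fun i => (i \in flatten c) == (i \in Zl)) (iota 0 n),
                     uniq c & dist_ok n c]) cls].

Lemma rgdd_okP Zl gsl dl cls g k :
  partition [set:: map mk gsl] (mk Zl) -> #|[set:: map mk gsl]| = k ->
  (forall G, G \in [set:: map mk gsl] -> #|G| = g) -> gdd_ok Zl gsl dl cls ->
  RGDD (mk Zl) [set:: map mk gsl] [set:: map mk dl] g k.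
Proof.
move=> hp hk hg /and5P [h1 h2 /allP h3 h4 /and3P [h5 h6 /allP h7]].
split.
  split => //; split => //; split => //; split.
    move=> B; rewrite inE => /mapP [l hl ->]; case/and3P: (h3 l hl) => a1 a2 /allP a3.
    split; first exact: sub_mk.
    split; first by rewrite card_mk (eqP a2).
    move=> G; rewrite inE => /mapP [gg hgg ->].
    rewrite setI_mk card_mk; move: (a3 gg hgg); apply: leq_trans.
    by rewrite leq_eqVlt; apply/orP; left; apply/eqP; apply: eq_count => y; rewrite mem_filter andbC.
  move=> a b; rewrite !in_mk => ha hb ne; rewrite exists_setseq has_map => hn.
  rewrite card_sep ?uniq_mk // count_map.
  have := allpairs_okP h4 a b; rewrite ha hb ordE ne /=.
  case/orP => [hh|/eqP <-].
    by move/negP: hn; case; move: hh; apply: sub_has => gg /=; rewrite !in_mk.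
  by apply: eq_count => l /=; rewrite !in_mk.
have hC : col_ok Zl dl cls.
  apply/and5P; split => //; apply/allP => c hc; by case/and4P: (h7 c hc).
have [P [hP _ _ eP]] := col_okP hC.
exists P; split => //.
move=> C; rewrite eP inE => /mapP [c /mapP [c0 hc0 ->] ->].
case/and4P: (h7 c0 hc0) => a1 a2 a3 a4.
apply: PC_of; first exact: uniq_mk.
  exact: PPCn_b.
by rewrite bigU_mk; apply/eqP; apply: eq_mk.
Qed.

End Chk.
Definition gsl : seq (seq nat) := [:: [:: 0; 9];
  [:: 1; 10];
  [:: 2; 11];
  [:: 3; 12];
  [:: 4; 13];
  [:: 5; 14];
  [:: 6; 15];
  [:: 7; 16];
  [:: 8; 17]].

Definition bsl : seq (seq nat) := [:: [:: 0; 1; 2; 19];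
  [:: 0; 1; 3; 7];
  [:: 0; 1; 4; 5];
  [:: 0; 1; 6; 8];
  [:: 0; 1; 9; 14];
  [:: 0; 1; 10; 17];
  [:: 0; 1; 11; 18];
  [:: 0; 1; 12; 13];
  [:: 0; 1; 15; 16];
  [:: 0; 2; 3; 4];
  [:: 0; 2; 5; 6];
  [:: 0; 2; 7; 8];
  [:: 0; 2; 9; 16];
  [:: 0; 2; 10; 18];
  [:: 0; 2; 11; 13];
  [:: 0; 2; 12; 14];
  [:: 0; 2; 15; 17];
  [:: 0; 3; 5; 8];
  [:: 0; 3; 6; 18];
  [:: 0; 3; 9; 13];
  [:: 0; 3; 10; 16];
  [:: 0; 3; 11; 12];
  [:: 0; 3; 14; 17];
  [:: 0; 3; 15; 19];
  [:: 0; 4; 6; 7];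
  [:: 0; 4; 8; 19];
  [:: 0; 4; 9; 12];
  [:: 0; 4; 10; 13];
  [:: 0; 4; 11; 16];
  [:: 0; 4; 14; 15];
  [:: 0; 4; 17; 18];
  [:: 0; 5; 7; 18];
  [:: 0; 5; 9; 10];
  [:: 0; 5; 11; 15];
  [:: 0; 5; 12; 17];
  [:: 0; 5; 13; 14];
  [:: 0; 5; 16; 19];
  [:: 0; 6; 9; 17];
  [:: 0; 6; 10; 15];
  [:: 0; 6; 11; 14];
  [:: 0; 6; 12; 19];
  [:: 0; 6; 13; 16];
  [:: 0; 7; 9; 11];
  [:: 0; 7; 10; 12];
  [:: 0; 7; 13; 15];
  [:: 0; 7; 14; 19];
  [:: 0; 7; 16; 17];
  [:: 0; 8; 9; 15];
  [:: 0; 8; 10; 14];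
  [:: 0; 8; 11; 17];
  [:: 0; 8; 12; 16];
  [:: 0; 8; 13; 18];
  [:: 0; 10; 11; 19];
  [:: 0; 12; 15; 18];
  [:: 0; 13; 17; 19];
  [:: 0; 14; 16; 18];
  [:: 1; 2; 3; 5];
  [:: 1; 2; 4; 8];
  [:: 1; 2; 6; 7];
  [:: 1; 2; 9; 18];
  [:: 1; 2; 10; 12];
  [:: 1; 2; 11; 15];
  [:: 1; 2; 13; 14];
  [:: 1; 2; 16; 17];
  [:: 1; 3; 4; 6];
  [:: 1; 3; 8; 18];
  [:: 1; 3; 9; 16];
  [:: 1; 3; 10; 11];
  [:: 1; 3; 12; 14];
  [:: 1; 3; 13; 15];
  [:: 1; 3; 17; 19];
  [:: 1; 4; 7; 18];
  [:: 1; 4; 9; 13];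
  [:: 1; 4; 10; 14];
  [:: 1; 4; 11; 17];
  [:: 1; 4; 12; 15];
  [:: 1; 4; 16; 19];
  [:: 1; 5; 6; 19];
  [:: 1; 5; 7; 8];
  [:: 1; 5; 9; 17];
  [:: 1; 5; 10; 13];
  [:: 1; 5; 11; 14];
  [:: 1; 5; 12; 16];
  [:: 1; 5; 15; 18];
  [:: 1; 6; 9; 15];
  [:: 1; 6; 10; 16];
  [:: 1; 6; 11; 12];
  [:: 1; 6; 13; 17];
  [:: 1; 6; 14; 18];
  [:: 1; 7; 9; 12];
  [:: 1; 7; 10; 15];
  [:: 1; 7; 11; 16];
  [:: 1; 7; 13; 19];
  [:: 1; 7; 14; 17];
  [:: 1; 8; 9; 10];
  [:: 1; 8; 11; 13];
  [:: 1; 8; 12; 19];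
  [:: 1; 8; 14; 16];
  [:: 1; 8; 15; 17];
  [:: 1; 9; 11; 19];
  [:: 1; 12; 17; 18];
  [:: 1; 13; 16; 18];
  [:: 1; 14; 15; 19];
  [:: 2; 3; 6; 8];
  [:: 2; 3; 7; 19];
  [:: 2; 3; 9; 12];
  [:: 2; 3; 10; 15];
  [:: 2; 3; 11; 14];
  [:: 2; 3; 13; 17];
  [:: 2; 3; 16; 18];
  [:: 2; 4; 5; 7];
  [:: 2; 4; 6; 18];
  [:: 2; 4; 9; 11];
  [:: 2; 4; 10; 17];
  [:: 2; 4; 12; 13];
  [:: 2; 4; 14; 16];
  [:: 2; 4; 15; 19];
  [:: 2; 5; 8; 18];
  [:: 2; 5; 9; 15];
  [:: 2; 5; 10; 14];
  [:: 2; 5; 11; 12];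
  [:: 2; 5; 13; 16];
  [:: 2; 5; 17; 19];
  [:: 2; 6; 9; 14];
  [:: 2; 6; 10; 11];
  [:: 2; 6; 12; 17];
  [:: 2; 6; 13; 19];
  [:: 2; 6; 15; 16];
  [:: 2; 7; 9; 13];
  [:: 2; 7; 10; 16];
  [:: 2; 7; 11; 17];
  [:: 2; 7; 12; 18];
  [:: 2; 7; 14; 15];
  [:: 2; 8; 9; 17];
  [:: 2; 8; 10; 13];
  [:: 2; 8; 11; 16];
  [:: 2; 8; 12; 15];
  [:: 2; 8; 14; 19];
  [:: 2; 9; 10; 19];
  [:: 2; 12; 16; 19];
  [:: 2; 13; 15; 18];
  [:: 2; 14; 17; 18];
  [:: 3; 4; 5; 19];
  [:: 3; 4; 7; 8];
  [:: 3; 4; 9; 10];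
  [:: 3; 4; 11; 13];
  [:: 3; 4; 12; 17];
  [:: 3; 4; 14; 18];
  [:: 3; 4; 15; 16];
  [:: 3; 5; 6; 7];
  [:: 3; 5; 9; 11];
  [:: 3; 5; 10; 12];
  [:: 3; 5; 13; 18];
  [:: 3; 5; 14; 16];
  [:: 3; 5; 15; 17];
  [:: 3; 6; 9; 19];
  [:: 3; 6; 10; 13];
  [:: 3; 6; 11; 17];
  [:: 3; 6; 12; 16];
  [:: 3; 6; 14; 15];
  [:: 3; 7; 9; 17];
  [:: 3; 7; 10; 14];
  [:: 3; 7; 11; 18];
  [:: 3; 7; 12; 15];
  [:: 3; 7; 13; 16];
  [:: 3; 8; 9; 14];
  [:: 3; 8; 10; 19];
  [:: 3; 8; 11; 15];
  [:: 3; 8; 12; 13];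
  [:: 3; 8; 16; 17];
  [:: 3; 9; 15; 18];
  [:: 3; 10; 17; 18];
  [:: 3; 11; 16; 19];
  [:: 3; 13; 14; 19];
  [:: 4; 5; 6; 8];
  [:: 4; 5; 9; 14];
  [:: 4; 5; 10; 11];
  [:: 4; 5; 12; 18];
  [:: 4; 5; 13; 15];
  [:: 4; 5; 16; 17];
  [:: 4; 6; 9; 16];
  [:: 4; 6; 10; 12];
  [:: 4; 6; 11; 19];
  [:: 4; 6; 13; 14];
  [:: 4; 6; 15; 17];
  [:: 4; 7; 9; 15];
  [:: 4; 7; 10; 19];
  [:: 4; 7; 11; 14];
  [:: 4; 7; 12; 16];
  [:: 4; 7; 13; 17];
  [:: 4; 8; 9; 18];
  [:: 4; 8; 10; 15];
  [:: 4; 8; 11; 12];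
  [:: 4; 8; 13; 16];
  [:: 4; 8; 14; 17];
  [:: 4; 9; 17; 19];
  [:: 4; 10; 16; 18];
  [:: 4; 11; 15; 18];
  [:: 4; 12; 14; 19];
  [:: 5; 6; 9; 13];
  [:: 5; 6; 10; 18];
  [:: 5; 6; 11; 16];
  [:: 5; 6; 12; 15];
  [:: 5; 6; 14; 17];
  [:: 5; 7; 9; 19];
  [:: 5; 7; 10; 17];
  [:: 5; 7; 11; 13];
  [:: 5; 7; 12; 14];
  [:: 5; 7; 15; 16];
  [:: 5; 8; 9; 12];
  [:: 5; 8; 10; 16];
  [:: 5; 8; 11; 19];
  [:: 5; 8; 13; 17];
  [:: 5; 8; 14; 15];
  [:: 5; 9; 16; 18];
  [:: 5; 10; 15; 19];
  [:: 5; 11; 17; 18];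
  [:: 5; 12; 13; 19];
  [:: 6; 7; 8; 19];
  [:: 6; 7; 9; 10];
  [:: 6; 7; 11; 15];
  [:: 6; 7; 12; 13];
  [:: 6; 7; 14; 16];
  [:: 6; 7; 17; 18];
  [:: 6; 8; 9; 11];
  [:: 6; 8; 10; 17];
  [:: 6; 8; 12; 14];
  [:: 6; 8; 13; 15];
  [:: 6; 8; 16; 18];
  [:: 6; 9; 12; 18];
  [:: 6; 10; 14; 19];
  [:: 6; 11; 13; 18];
  [:: 6; 16; 17; 19];
  [:: 7; 8; 9; 16];
  [:: 7; 8; 10; 11];
  [:: 7; 8; 12; 17];
  [:: 7; 8; 13; 14];
  [:: 7; 8; 15; 18];
  [:: 7; 9; 14; 18];
  [:: 7; 10; 13; 18];
  [:: 7; 11; 12; 19];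
  [:: 7; 15; 17; 19];
  [:: 8; 9; 13; 19];
  [:: 8; 10; 12; 18];
  [:: 8; 11; 14; 18];
  [:: 8; 15; 16; 19];
  [:: 9; 10; 11; 18];
  [:: 9; 10; 12; 16];
  [:: 9; 10; 13; 14];
  [:: 9; 10; 15; 17];
  [:: 9; 11; 12; 13];
  [:: 9; 11; 14; 15];
  [:: 9; 11; 16; 17];
  [:: 9; 12; 14; 17];
  [:: 9; 12; 15; 19];
  [:: 9; 13; 15; 16];
  [:: 9; 13; 17; 18];
  [:: 9; 14; 16; 19];
  [:: 10; 11; 12; 14];
  [:: 10; 11; 13; 17];
  [:: 10; 11; 15; 16];
  [:: 10; 12; 13; 15];
  [:: 10; 12; 17; 19];
  [:: 10; 13; 16; 19];
  [:: 10; 14; 15; 18];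
  [:: 10; 14; 16; 17];
  [:: 11; 12; 15; 17];
  [:: 11; 12; 16; 18];
  [:: 11; 13; 14; 16];
  [:: 11; 13; 15; 19];
  [:: 11; 14; 17; 19];
  [:: 12; 13; 14; 18];
  [:: 12; 13; 16; 17];
  [:: 12; 14; 15; 16];
  [:: 13; 14; 15; 17];
  [:: 15; 16; 17; 18]].

Definition colsl : seq (seq (seq (seq nat))) := [:: [:: [:: [:: 7; 16; 17];
  [:: 2; 11; 13];
  [:: 3; 5; 8];
  [:: 4; 14; 15]];
 [:: [:: 2; 15; 17];
  [:: 4; 11; 16];
  [:: 5; 13; 14];
  [:: 7; 10; 12];
  [:: 1; 6; 8]];
 [:: [:: 8; 13; 18];
  [:: 10; 11; 19];
  [:: 2; 5; 6];
  [:: 1; 15; 16];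
  [:: 4; 9; 12];
  [:: 3; 14; 17]];
 [:: [:: 12; 15; 18];
  [:: 5; 16; 19];
  [:: 2; 7; 8];
  [:: 6; 11; 14];
  [:: 3; 9; 13];
  [:: 1; 10; 17]];
 [:: [:: 4; 17; 18];
  [:: 6; 12; 19];
  [:: 1; 3; 7];
  [:: 2; 9; 16];
  [:: 5; 11; 15];
  [:: 8; 10; 14]];
 [:: [:: 3; 6; 18];
  [:: 1; 2; 19];
  [:: 7; 9; 11];
  [:: 5; 12; 17];
  [:: 4; 10; 13]];
 [:: [:: 5; 7; 18];
  [:: 13; 17; 19];
  [:: 8; 12; 16];
  [:: 2; 3; 4];
  [:: 1; 9; 14];
  [:: 6; 10; 15]];
 [:: [:: 2; 10; 18];
  [:: 7; 14; 19];
  [:: 1; 4; 5];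
  [:: 8; 9; 15];
  [:: 6; 13; 16];
  [:: 3; 11; 12]];
 [:: [:: 14; 16; 18];
  [:: 3; 15; 19];
  [:: 8; 11; 17];
  [:: 1; 12; 13];
  [:: 5; 9; 10];
  [:: 4; 6; 7]];
 [:: [:: 1; 11; 18];
  [:: 4; 8; 19];
  [:: 2; 12; 14];
  [:: 3; 10; 16];
  [:: 7; 13; 15];
  [:: 6; 9; 17]]];
[:: [:: [:: 8; 15; 17];
  [:: 0; 9; 14];
  [:: 3; 4; 6];
  [:: 5; 12; 16]];
 [:: [:: 0; 15; 16];
  [:: 5; 9; 17];
  [:: 3; 12; 14];
  [:: 8; 11; 13];
  [:: 2; 6; 7]];
 [:: [:: 6; 14; 18];
  [:: 9; 11; 19];
  [:: 0; 3; 7];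
  [:: 2; 16; 17];
  [:: 5; 10; 13];
  [:: 4; 12; 15]];
 [:: [:: 13; 16; 18];
  [:: 3; 17; 19];
  [:: 0; 6; 8];
  [:: 7; 9; 12];
  [:: 4; 10; 14];
  [:: 2; 11; 15]];
 [:: [:: 5; 15; 18];
  [:: 7; 13; 19];
  [:: 2; 4; 8];
  [:: 0; 10; 17];
  [:: 3; 9; 16];
  [:: 6; 11; 12]];
 [:: [:: 4; 7; 18];
  [:: 0; 2; 19];
  [:: 8; 9; 10];
  [:: 3; 13; 15];
  [:: 5; 11; 14]];
 [:: [:: 3; 8; 18];
  [:: 14; 15; 19];
  [:: 6; 13; 17];
  [:: 0; 4; 5];
  [:: 2; 10; 12];
  [:: 7; 11; 16]];
 [:: [:: 0; 11; 18];
  [:: 8; 12; 19];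
  [:: 2; 3; 5];
  [:: 6; 10; 16];
  [:: 7; 14; 17];
  [:: 4; 9; 13]];
 [:: [:: 12; 17; 18];
  [:: 4; 16; 19];
  [:: 6; 9; 15];
  [:: 2; 13; 14];
  [:: 3; 10; 11];
  [:: 5; 7; 8]];
 [:: [:: 2; 9; 18];
  [:: 5; 6; 19];
  [:: 0; 12; 13];
  [:: 4; 11; 17];
  [:: 8; 14; 16];
  [:: 7; 10; 15]]];
[:: [:: [:: 6; 15; 16];
  [:: 1; 10; 12];
  [:: 4; 5; 7];
  [:: 3; 13; 17]];
 [:: [:: 1; 16; 17];
  [:: 3; 10; 15];
  [:: 4; 12; 13];
  [:: 6; 9; 14];
  [:: 0; 7; 8]];
 [:: [:: 7; 12; 18];
  [:: 9; 10; 19];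
  [:: 1; 4; 8];
  [:: 0; 15; 17];
  [:: 3; 11; 14];
  [:: 5; 13; 16]];
 [:: [:: 14; 17; 18];
  [:: 4; 15; 19];
  [:: 1; 6; 7];
  [:: 8; 10; 13];
  [:: 5; 11; 12];
  [:: 0; 9; 16]];
 [:: [:: 3; 16; 18];
  [:: 8; 14; 19];
  [:: 0; 5; 6];
  [:: 1; 11; 15];
  [:: 4; 10; 17];
  [:: 7; 9; 13]];
 [:: [:: 5; 8; 18];
  [:: 0; 1; 19];
  [:: 6; 10; 11];
  [:: 4; 14; 16];
  [:: 3; 9; 12]];
 [:: [:: 4; 6; 18];
  [:: 12; 16; 19];
  [:: 7; 14; 15];
  [:: 1; 3; 5];
  [:: 0; 11; 13];
  [:: 8; 9; 17]];
 [:: [:: 1; 9; 18];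
  [:: 6; 13; 19];
  [:: 0; 3; 4];
  [:: 7; 11; 17];
  [:: 8; 12; 15];
  [:: 5; 10; 14]];
 [:: [:: 13; 15; 18];
  [:: 5; 17; 19];
  [:: 7; 10; 16];
  [:: 0; 12; 14];
  [:: 4; 9; 11];
  [:: 3; 6; 8]];
 [:: [:: 0; 10; 18];
  [:: 3; 7; 19];
  [:: 1; 13; 14];
  [:: 5; 9; 15];
  [:: 6; 12; 17];
  [:: 8; 11; 16]]];
[:: [:: [:: 1; 10; 11];
  [:: 5; 14; 16];
  [:: 2; 6; 8];
  [:: 7; 9; 17]];
 [:: [:: 5; 9; 11];
  [:: 7; 10; 14];
  [:: 8; 16; 17];
  [:: 1; 13; 15];
  [:: 0; 2; 4]];
 [:: [:: 2; 16; 18];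
  [:: 13; 14; 19];
  [:: 0; 5; 8];
  [:: 4; 9; 10];
  [:: 7; 12; 15];
  [:: 6; 11; 17]];
 [:: [:: 9; 15; 18];
  [:: 8; 10; 19];
  [:: 1; 2; 5];
  [:: 0; 14; 17];
  [:: 6; 12; 16];
  [:: 4; 11; 13]];
 [:: [:: 7; 11; 18];
  [:: 0; 15; 19];
  [:: 1; 4; 6];
  [:: 5; 10; 12];
  [:: 8; 9; 14];
  [:: 2; 13; 17]];
 [:: [:: 0; 6; 18];
  [:: 4; 5; 19];
  [:: 1; 12; 14];
  [:: 8; 11; 15];
  [:: 7; 13; 16]];
 [:: [:: 1; 8; 18];
  [:: 11; 16; 19];
  [:: 2; 10; 15];
  [:: 5; 6; 7];
  [:: 4; 12; 17];
  [:: 0; 9; 13]];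
 [:: [:: 5; 13; 18];
  [:: 1; 17; 19];
  [:: 4; 7; 8];
  [:: 2; 9; 12];
  [:: 0; 10; 16];
  [:: 6; 14; 15]];
 [:: [:: 10; 17; 18];
  [:: 6; 9; 19];
  [:: 2; 11; 14];
  [:: 4; 15; 16];
  [:: 8; 12; 13];
  [:: 0; 1; 7]];
 [:: [:: 4; 14; 18];
  [:: 2; 7; 19];
  [:: 5; 15; 17];
  [:: 6; 10; 13];
  [:: 1; 9; 16];
  [:: 0; 11; 12]]];
[:: [:: [:: 2; 9; 11];
  [:: 3; 12; 17];
  [:: 0; 6; 7];
  [:: 8; 10; 15]];
 [:: [:: 3; 9; 10];
  [:: 8; 11; 12];
  [:: 6; 15; 17];
  [:: 2; 14; 16];
  [:: 0; 1; 5]];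
 [:: [:: 0; 17; 18];
  [:: 12; 14; 19];
  [:: 1; 3; 6];
  [:: 5; 10; 11];
  [:: 8; 13; 16];
  [:: 7; 9; 15]];
 [:: [:: 10; 16; 18];
  [:: 6; 11; 19];
  [:: 0; 2; 3];
  [:: 1; 12; 15];
  [:: 7; 13; 17];
  [:: 5; 9; 14]];
 [:: [:: 8; 9; 18];
  [:: 1; 16; 19];
  [:: 2; 5; 7];
  [:: 3; 11; 13];
  [:: 6; 10; 12];
  [:: 0; 14; 15]];
 [:: [:: 1; 7; 18];
  [:: 3; 5; 19];
  [:: 2; 12; 13];
  [:: 6; 9; 16];
  [:: 8; 14; 17]];
 [:: [:: 2; 6; 18];
  [:: 9; 17; 19];
  [:: 0; 11; 16];
  [:: 3; 7; 8];
  [:: 5; 13; 15];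
  [:: 1; 10; 14]];
 [:: [:: 3; 14; 18];
  [:: 2; 15; 19];
  [:: 5; 6; 8];
  [:: 0; 10; 13];
  [:: 1; 11; 17];
  [:: 7; 12; 16]];
 [:: [:: 11; 15; 18];
  [:: 7; 10; 19];
  [:: 0; 9; 12];
  [:: 5; 16; 17];
  [:: 6; 13; 14];
  [:: 1; 2; 8]];
 [:: [:: 5; 12; 18];
  [:: 0; 8; 19];
  [:: 3; 15; 16];
  [:: 7; 11; 14];
  [:: 2; 10; 17];
  [:: 1; 9; 13]]];
[:: [:: [:: 0; 9; 10];
  [:: 4; 13; 15];
  [:: 1; 7; 8];
  [:: 6; 11; 16]];
 [:: [:: 4; 10; 11];
  [:: 6; 9; 13];
  [:: 7; 15; 16];
  [:: 0; 12; 17];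
  [:: 1; 2; 3]];
 [:: [:: 1; 15; 18];
  [:: 12; 13; 19];
  [:: 2; 4; 7];
  [:: 3; 9; 11];
  [:: 6; 14; 17];
  [:: 8; 10; 16]];
 [:: [:: 11; 17; 18];
  [:: 7; 9; 19];
  [:: 0; 1; 4];
  [:: 2; 13; 16];
  [:: 8; 14; 15];
  [:: 3; 10; 12]];
 [:: [:: 6; 10; 18];
  [:: 2; 17; 19];
  [:: 0; 3; 8];
  [:: 4; 9; 14];
  [:: 7; 11; 13];
  [:: 1; 12; 16]];
 [:: [:: 2; 8; 18];
  [:: 3; 4; 19];
  [:: 0; 13; 14];
  [:: 7; 10; 17];
  [:: 6; 12; 15]];
 [:: [:: 0; 7; 18];
  [:: 10; 15; 19];
  [:: 1; 9; 17];
  [:: 4; 6; 8];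
  [:: 3; 14; 16];
  [:: 2; 11; 12]];
 [:: [:: 4; 12; 18];
  [:: 0; 16; 19];
  [:: 3; 6; 7];
  [:: 1; 11; 14];
  [:: 2; 9; 15];
  [:: 8; 13; 17]];
 [:: [:: 9; 16; 18];
  [:: 8; 11; 19];
  [:: 1; 10; 13];
  [:: 3; 15; 17];
  [:: 7; 12; 14];
  [:: 0; 2; 6]];
 [:: [:: 3; 13; 18];
  [:: 1; 6; 19];
  [:: 4; 16; 17];
  [:: 8; 9; 12];
  [:: 0; 11; 15];
  [:: 2; 10; 14]]];
[:: [:: [:: 4; 13; 14];
  [:: 8; 10; 17];
  [:: 0; 2; 5];
  [:: 1; 11; 12]];
 [:: [:: 8; 12; 14];
  [:: 1; 13; 17];
  [:: 2; 10; 11];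
  [:: 4; 9; 16];
  [:: 3; 5; 7]];
 [:: [:: 5; 10; 18];
  [:: 16; 17; 19];
  [:: 2; 3; 8];
  [:: 7; 12; 13];
  [:: 1; 9; 15];
  [:: 0; 11; 14]];
 [:: [:: 9; 12; 18];
  [:: 2; 13; 19];
  [:: 4; 5; 8];
  [:: 3; 11; 17];
  [:: 0; 10; 15];
  [:: 7; 14; 16]];
 [:: [:: 1; 14; 18];
  [:: 3; 9; 19];
  [:: 0; 4; 7];
  [:: 8; 13; 15];
  [:: 2; 12; 17];
  [:: 5; 11; 16]];
 [:: [:: 0; 3; 18];
  [:: 7; 8; 19];
  [:: 4; 15; 17];
  [:: 2; 9; 14];
  [:: 1; 10; 16]];
 [:: [:: 2; 4; 18];
  [:: 10; 14; 19];
  [:: 5; 9; 13];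
  [:: 0; 1; 8];
  [:: 7; 11; 15];
  [:: 3; 12; 16]];
 [:: [:: 8; 16; 18];
  [:: 4; 11; 19];
  [:: 1; 2; 7];
  [:: 5; 12; 15];
  [:: 3; 10; 13];
  [:: 0; 9; 17]];
 [:: [:: 11; 13; 18];
  [:: 0; 12; 19];
  [:: 5; 14; 17];
  [:: 7; 9; 10];
  [:: 2; 15; 16];
  [:: 1; 3; 4]];
 [:: [:: 7; 17; 18];
  [:: 1; 5; 19];
  [:: 8; 9; 11];
  [:: 0; 13; 16];
  [:: 4; 10; 12];
  [:: 3; 14; 15]]];
[:: [:: [:: 5; 12; 14];
  [:: 6; 11; 15];
  [:: 0; 1; 3];
  [:: 2; 9; 13]];
 [:: [:: 6; 12; 13];
  [:: 2; 14; 15];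
  [:: 0; 9; 11];
  [:: 5; 10; 17];
  [:: 3; 4; 8]];
 [:: [:: 3; 11; 18];
  [:: 15; 17; 19];
  [:: 0; 4; 6];
  [:: 8; 13; 14];
  [:: 2; 10; 16];
  [:: 1; 9; 12]];
 [:: [:: 10; 13; 18];
  [:: 0; 14; 19];
  [:: 3; 5; 6];
  [:: 4; 9; 15];
  [:: 1; 11; 16];
  [:: 8; 12; 17]];
 [:: [:: 2; 12; 18];
  [:: 4; 10; 19];
  [:: 1; 5; 8];
  [:: 6; 14; 16];
  [:: 0; 13; 15];
  [:: 3; 9; 17]];
 [:: [:: 1; 4; 18];
  [:: 6; 8; 19];
  [:: 5; 15; 16];
  [:: 0; 10; 12];
  [:: 2; 11; 17]];
 [:: [:: 0; 5; 18];
  [:: 11; 12; 19];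
  [:: 3; 10; 14];
  [:: 1; 2; 6];
  [:: 8; 9; 16];
  [:: 4; 13; 17]];
 [:: [:: 6; 17; 18];
  [:: 5; 9; 19];
  [:: 0; 2; 8];
  [:: 3; 13; 16];
  [:: 4; 11; 14];
  [:: 1; 10; 15]];
 [:: [:: 9; 14; 18];
  [:: 1; 13; 19];
  [:: 3; 12; 15];
  [:: 8; 10; 11];
  [:: 0; 16; 17];
  [:: 2; 4; 5]];
 [:: [:: 8; 15; 18];
  [:: 2; 3; 19];
  [:: 6; 9; 10];
  [:: 1; 14; 17];
  [:: 5; 11; 13];
  [:: 4; 12; 16]]];
[:: [:: [:: 3; 12; 13];
  [:: 7; 9; 16];
  [:: 1; 2; 4];
  [:: 0; 10; 14]];
 [:: [:: 7; 13; 14];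
  [:: 0; 12; 16];
  [:: 1; 9; 10];
  [:: 3; 11; 15];
  [:: 4; 5; 6]];
 [:: [:: 4; 9; 18];
  [:: 15; 16; 19];
  [:: 1; 5; 7];
  [:: 6; 12; 14];
  [:: 0; 11; 17];
  [:: 2; 10; 13]];
 [:: [:: 11; 14; 18];
  [:: 1; 12; 19];
  [:: 3; 4; 7];
  [:: 5; 10; 16];
  [:: 2; 9; 17];
  [:: 6; 13; 15]];
 [:: [:: 0; 13; 18];
  [:: 5; 11; 19];
  [:: 2; 3; 6];
  [:: 7; 12; 17];
  [:: 1; 14; 16];
  [:: 4; 10; 15]];
 [:: [:: 2; 5; 18];
  [:: 6; 7; 19];
  [:: 3; 16; 17];
  [:: 1; 11; 13];
  [:: 0; 9; 15]];
 [:: [:: 1; 3; 18];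
  [:: 9; 13; 19];
  [:: 4; 11; 12];
  [:: 0; 2; 7];
  [:: 6; 10; 17];
  [:: 5; 14; 15]];
 [:: [:: 7; 15; 18];
  [:: 3; 10; 19];
  [:: 0; 1; 6];
  [:: 4; 14; 17];
  [:: 5; 9; 12];
  [:: 2; 11; 16]];
 [:: [:: 10; 12; 18];
  [:: 2; 14; 19];
  [:: 4; 13; 16];
  [:: 6; 9; 11];
  [:: 1; 15; 17];
  [:: 0; 3; 5]];
 [:: [:: 6; 16; 18];
  [:: 0; 4; 19];
  [:: 7; 10; 11];
  [:: 2; 12; 15];
  [:: 3; 9; 14];
  [:: 5; 13; 17]]];
[:: [:: [:: 7; 8; 16];
  [:: 2; 4; 11];
  [:: 12; 14; 17];
  [:: 5; 6; 13]];
 [:: [:: 6; 8; 11];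
  [:: 2; 7; 13];
  [:: 4; 5; 14];
  [:: 1; 3; 16];
  [:: 10; 15; 17]];
 [:: [:: 4; 17; 19];
  [:: 1; 2; 18];
  [:: 11; 14; 15];
  [:: 6; 7; 10];
  [:: 0; 3; 13];
  [:: 5; 8; 12]];
 [:: [:: 3; 6; 19];
  [:: 7; 14; 18];
  [:: 11; 16; 17];
  [:: 2; 5; 15];
  [:: 0; 4; 12];
  [:: 1; 8; 10]];
 [:: [:: 8; 13; 19];
  [:: 3; 15; 18];
  [:: 10; 12; 16];
  [:: 0; 7; 11];
  [:: 2; 6; 14];
  [:: 1; 5; 17]];
 [:: [:: 12; 15; 19];
  [:: 10; 11; 18];
  [:: 0; 2; 16];
  [:: 3; 8; 14];
  [:: 1; 4; 13]];
 [:: [:: 14; 16; 19];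
  [:: 4; 8; 18];
  [:: 3; 7; 17];
  [:: 11; 12; 13];
  [:: 0; 5; 10];
  [:: 1; 6; 15]];
 [:: [:: 1; 11; 19];
  [:: 5; 16; 18];
  [:: 10; 13; 14];
  [:: 0; 6; 17];
  [:: 4; 7; 15];
  [:: 2; 3; 12]];
 [:: [:: 5; 7; 19];
  [:: 6; 12; 18];
  [:: 2; 8; 17];
  [:: 3; 4; 10];
  [:: 0; 1; 14];
  [:: 13; 15; 16]];
 [:: [:: 2; 10; 19];
  [:: 13; 17; 18];
  [:: 3; 5; 11];
  [:: 1; 7; 12];
  [:: 4; 6; 16];
  [:: 0; 8; 15]]];
[:: [:: [:: 6; 8; 17];
  [:: 0; 5; 9];
  [:: 12; 13; 15];
  [:: 3; 7; 14]];
 [:: [:: 6; 7; 9];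
  [:: 0; 8; 14];
  [:: 3; 5; 12];
  [:: 2; 4; 17];
  [:: 11; 15; 16]];
 [:: [:: 5; 15; 19];
  [:: 0; 2; 18];
  [:: 9; 12; 16];
  [:: 7; 8; 11];
  [:: 1; 4; 14];
  [:: 3; 6; 13]];
 [:: [:: 4; 7; 19];
  [:: 8; 12; 18];
  [:: 9; 15; 17];
  [:: 0; 3; 16];
  [:: 1; 5; 13];
  [:: 2; 6; 11]];
 [:: [:: 6; 14; 19];
  [:: 4; 16; 18];
  [:: 11; 13; 17];
  [:: 1; 8; 9];
  [:: 0; 7; 12];
  [:: 2; 3; 15]];
 [:: [:: 13; 16; 19];
  [:: 9; 11; 18];
  [:: 0; 1; 17];
  [:: 4; 6; 12];
  [:: 2; 5; 14]];
 [:: [:: 12; 17; 19];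
  [:: 5; 6; 18];
  [:: 4; 8; 15];
  [:: 9; 13; 14];
  [:: 1; 3; 11];
  [:: 2; 7; 16]];
 [:: [:: 2; 9; 19];
  [:: 3; 17; 18];
  [:: 11; 12; 14];
  [:: 1; 7; 15];
  [:: 5; 8; 16];
  [:: 0; 4; 13]];
 [:: [:: 3; 8; 19];
  [:: 7; 13; 18];
  [:: 0; 6; 15];
  [:: 4; 5; 11];
  [:: 1; 2; 12];
  [:: 14; 16; 17]];
 [:: [:: 0; 11; 19];
  [:: 14; 15; 18];
  [:: 3; 4; 9];
  [:: 2; 8; 13];
  [:: 5; 7; 17];
  [:: 1; 6; 16]]];
[:: [:: [:: 6; 7; 15];
  [:: 1; 3; 10];
  [:: 13; 14; 16];
  [:: 4; 8; 12]];
 [:: [:: 7; 8; 10];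
  [:: 1; 6; 12];
  [:: 3; 4; 13];
  [:: 0; 5; 15];
  [:: 9; 16; 17]];
 [:: [:: 3; 16; 19];
  [:: 0; 1; 18];
  [:: 10; 13; 17];
  [:: 6; 8; 9];
  [:: 2; 5; 12];
  [:: 4; 7; 14]];
 [:: [:: 5; 8; 19];
  [:: 6; 13; 18];
  [:: 10; 15; 16];
  [:: 1; 4; 17];
  [:: 2; 3; 14];
  [:: 0; 7; 9]];
 [:: [:: 7; 12; 19];
  [:: 5; 17; 18];
  [:: 9; 14; 15];
  [:: 2; 6; 10];
  [:: 1; 8; 13];
  [:: 0; 4; 16]];
 [:: [:: 14; 17; 19];
  [:: 9; 10; 18];
  [:: 1; 2; 15];
  [:: 5; 7; 13];
  [:: 0; 3; 12]];
 [:: [:: 13; 15; 19];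
  [:: 3; 7; 18];
  [:: 5; 6; 16];
  [:: 10; 12; 14];
  [:: 2; 4; 9];
  [:: 0; 8; 17]];
 [:: [:: 0; 10; 19];
  [:: 4; 15; 18];
  [:: 9; 12; 13];
  [:: 2; 8; 16];
  [:: 3; 6; 17];
  [:: 1; 5; 14]];
 [:: [:: 4; 6; 19];
  [:: 8; 14; 18];
  [:: 1; 7; 16];
  [:: 3; 5; 9];
  [:: 0; 2; 13];
  [:: 12; 15; 17]];
 [:: [:: 1; 9; 19];
  [:: 12; 16; 18];
  [:: 4; 5; 10];
  [:: 0; 6; 14];
  [:: 3; 8; 15];
  [:: 2; 7; 17]]];
[:: [:: [:: 1; 2; 10];
  [:: 5; 7; 14];
  [:: 11; 15; 17];
  [:: 0; 8; 16]];
 [:: [:: 0; 2; 14];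
  [:: 1; 5; 16];
  [:: 7; 8; 17];
  [:: 4; 6; 10];
  [:: 9; 11; 13]];
 [:: [:: 7; 11; 19];
  [:: 4; 5; 18];
  [:: 9; 14; 17];
  [:: 0; 1; 13];
  [:: 3; 6; 16];
  [:: 2; 8; 15]];
 [:: [:: 0; 6; 19];
  [:: 1; 17; 18];
  [:: 10; 11; 14];
  [:: 5; 8; 9];
  [:: 3; 7; 15];
  [:: 2; 4; 13]];
 [:: [:: 2; 16; 19];
  [:: 6; 9; 18];
  [:: 10; 13; 15];
  [:: 1; 3; 14];
  [:: 0; 5; 17];
  [:: 4; 8; 11]];
 [:: [:: 9; 15; 19];
  [:: 13; 14; 18];
  [:: 3; 5; 10];
  [:: 2; 6; 17];
  [:: 4; 7; 16]];
 [:: [:: 10; 17; 19];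
  [:: 2; 7; 18];
  [:: 1; 6; 11];
  [:: 14; 15; 16];
  [:: 3; 8; 13];
  [:: 0; 4; 9]];
 [:: [:: 4; 14; 19];
  [:: 8; 10; 18];
  [:: 13; 16; 17];
  [:: 0; 3; 11];
  [:: 1; 7; 9];
  [:: 5; 6; 15]];
 [:: [:: 1; 8; 19];
  [:: 0; 15; 18];
  [:: 2; 5; 11];
  [:: 6; 7; 13];
  [:: 3; 4; 17];
  [:: 9; 10; 16]];
 [:: [:: 5; 13; 19];
  [:: 11; 16; 18];
  [:: 6; 8; 14];
  [:: 1; 4; 15];
  [:: 0; 7; 10];
  [:: 2; 3; 9]]];
[:: [:: [:: 0; 2; 11];
  [:: 3; 8; 12];
  [:: 9; 15; 16];
  [:: 1; 6; 17]];
 [:: [:: 0; 1; 12];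
  [:: 2; 3; 17];
  [:: 6; 8; 15];
  [:: 5; 7; 11];
  [:: 9; 10; 14]];
 [:: [:: 8; 9; 19];
  [:: 3; 5; 18];
  [:: 10; 12; 15];
  [:: 1; 2; 14];
  [:: 4; 7; 17];
  [:: 0; 6; 16]];
 [:: [:: 1; 7; 19];
  [:: 2; 15; 18];
  [:: 9; 11; 12];
  [:: 3; 6; 10];
  [:: 4; 8; 16];
  [:: 0; 5; 14]];
 [:: [:: 0; 17; 19];
  [:: 7; 10; 18];
  [:: 11; 14; 16];
  [:: 2; 4; 12];
  [:: 1; 3; 15];
  [:: 5; 6; 9]];
 [:: [:: 10; 16; 19];
  [:: 12; 14; 18];
  [:: 3; 4; 11];
  [:: 0; 7; 15];
  [:: 5; 8; 17]];
 [:: [:: 11; 15; 19];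
  [:: 0; 8; 18];
  [:: 2; 7; 9];
  [:: 12; 16; 17];
  [:: 4; 6; 14];
  [:: 1; 5; 10]];
 [:: [:: 5; 12; 19];
  [:: 6; 11; 18];
  [:: 14; 15; 17];
  [:: 1; 4; 9];
  [:: 2; 8; 10];
  [:: 3; 7; 16]];
 [:: [:: 2; 6; 19];
  [:: 1; 16; 18];
  [:: 0; 3; 9];
  [:: 7; 8; 14];
  [:: 4; 5; 15];
  [:: 10; 11; 17]];
 [:: [:: 3; 14; 19];
  [:: 9; 17; 18];
  [:: 6; 7; 12];
  [:: 2; 5; 16];
  [:: 1; 8; 11];
  [:: 0; 4; 10]]];
[:: [:: [:: 0; 1; 9];
  [:: 4; 6; 13];
  [:: 10; 16; 17];
  [:: 2; 7; 15]];
 [:: [:: 1; 2; 13];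
  [:: 0; 4; 15];
  [:: 6; 7; 16];
  [:: 3; 8; 9];
  [:: 10; 11; 12]];
 [:: [:: 6; 10; 19];
  [:: 3; 4; 18];
  [:: 11; 13; 16];
  [:: 0; 2; 12];
  [:: 5; 8; 15];
  [:: 1; 7; 17]];
 [:: [:: 2; 8; 19];
  [:: 0; 16; 18];
  [:: 9; 10; 13];
  [:: 4; 7; 11];
  [:: 5; 6; 17];
  [:: 1; 3; 12]];
 [:: [:: 1; 15; 19];
  [:: 8; 11; 18];
  [:: 9; 12; 17];
  [:: 0; 5; 13];
  [:: 2; 4; 16];
  [:: 3; 7; 10]];
 [:: [:: 11; 17; 19];
  [:: 12; 13; 18];
  [:: 4; 5; 9];
  [:: 1; 8; 16];
  [:: 3; 6; 15]];
 [:: [:: 9; 16; 19];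
  [:: 1; 6; 18];
  [:: 0; 8; 10];
  [:: 13; 15; 17];
  [:: 5; 7; 12];
  [:: 2; 3; 11]];
 [:: [:: 3; 13; 19];
  [:: 7; 9; 18];
  [:: 12; 15; 16];
  [:: 2; 5; 10];
  [:: 0; 6; 11];
  [:: 4; 8; 17]];
 [:: [:: 0; 7; 19];
  [:: 2; 17; 18];
  [:: 1; 4; 10];
  [:: 6; 8; 12];
  [:: 3; 5; 16];
  [:: 9; 11; 15]];
 [:: [:: 4; 12; 19];
  [:: 10; 15; 18];
  [:: 7; 8; 13];
  [:: 0; 3; 17];
  [:: 2; 6; 9];
  [:: 1; 5; 11]]];
[:: [:: [:: 4; 5; 13];
  [:: 1; 8; 17];
  [:: 9; 11; 14];
  [:: 2; 3; 10]];
 [:: [:: 3; 5; 17];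
  [:: 4; 8; 10];
  [:: 1; 2; 11];
  [:: 0; 7; 13];
  [:: 12; 14; 16]];
 [:: [:: 1; 14; 19];
  [:: 7; 8; 18];
  [:: 11; 12; 17];
  [:: 3; 4; 16];
  [:: 0; 6; 10];
  [:: 2; 5; 9]];
 [:: [:: 0; 3; 19];
  [:: 4; 11; 18];
  [:: 13; 14; 17];
  [:: 2; 8; 12];
  [:: 1; 6; 9];
  [:: 5; 7; 16]];
 [:: [:: 5; 10; 19];
  [:: 0; 12; 18];
  [:: 9; 13; 16];
  [:: 4; 6; 17];
  [:: 3; 8; 11];
  [:: 2; 7; 14]];
 [:: [:: 9; 12; 19];
  [:: 16; 17; 18];
  [:: 6; 8; 13];
  [:: 0; 5; 11];
  [:: 1; 7; 10]];
 [:: [:: 11; 13; 19];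
  [:: 1; 5; 18];
  [:: 0; 4; 14];
  [:: 9; 10; 17];
  [:: 2; 6; 16];
  [:: 3; 7; 12]];
 [:: [:: 7; 17; 19];
  [:: 2; 13; 18];
  [:: 10; 11; 16];
  [:: 3; 6; 14];
  [:: 1; 4; 12];
  [:: 0; 8; 9]];
 [:: [:: 2; 4; 19];
  [:: 3; 9; 18];
  [:: 5; 8; 14];
  [:: 0; 1; 16];
  [:: 6; 7; 11];
  [:: 10; 12; 13]];
 [:: [:: 8; 16; 19];
  [:: 10; 14; 18];
  [:: 0; 2; 17];
  [:: 4; 7; 9];
  [:: 1; 3; 13];
  [:: 5; 6; 12]]];
[:: [:: [:: 3; 5; 14];
  [:: 2; 6; 15];
  [:: 9; 10; 12];
  [:: 0; 4; 11]];
 [:: [:: 3; 4; 15];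
  [:: 5; 6; 11];
  [:: 0; 2; 9];
  [:: 1; 8; 14];
  [:: 12; 13; 17]];
 [:: [:: 2; 12; 19];
  [:: 6; 8; 18];
  [:: 9; 13; 15];
  [:: 4; 5; 17];
  [:: 1; 7; 11];
  [:: 0; 3; 10]];
 [:: [:: 1; 4; 19];
  [:: 5; 9; 18];
  [:: 12; 14; 15];
  [:: 0; 6; 13];
  [:: 2; 7; 10];
  [:: 3; 8; 17]];
 [:: [:: 3; 11; 19];
  [:: 1; 13; 18];
  [:: 10; 14; 17];
  [:: 5; 7; 15];
  [:: 4; 6; 9];
  [:: 0; 8; 12]];
 [:: [:: 10; 13; 19];
  [:: 15; 17; 18];
  [:: 6; 7; 14];
  [:: 1; 3; 9];
  [:: 2; 8; 11]];
 [:: [:: 9; 14; 19];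
  [:: 2; 3; 18];
  [:: 1; 5; 12];
  [:: 10; 11; 15];
  [:: 0; 7; 17];
  [:: 4; 8; 13]];
 [:: [:: 8; 15; 19];
  [:: 0; 14; 18];
  [:: 9; 11; 17];
  [:: 4; 7; 12];
  [:: 2; 5; 13];
  [:: 1; 6; 10]];
 [:: [:: 0; 5; 19];
  [:: 4; 10; 18];
  [:: 3; 6; 12];
  [:: 1; 2; 17];
  [:: 7; 8; 9];
  [:: 11; 13; 14]];
 [:: [:: 6; 17; 19];
  [:: 11; 12; 18];
  [:: 0; 1; 15];
  [:: 5; 8; 10];
  [:: 2; 4; 14];
  [:: 3; 7; 13]]];
[:: [:: [:: 3; 4; 12];
  [:: 0; 7; 16];
  [:: 10; 11; 13];
  [:: 1; 5; 9]];
 [:: [:: 4; 5; 16];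
  [:: 3; 7; 9];
  [:: 0; 1; 10];
  [:: 2; 6; 12];
  [:: 13; 14; 15]];
 [:: [:: 0; 13; 19];
  [:: 6; 7; 18];
  [:: 10; 14; 16];
  [:: 3; 5; 15];
  [:: 2; 8; 9];
  [:: 1; 4; 11]];
 [:: [:: 2; 5; 19];
  [:: 3; 10; 18];
  [:: 12; 13; 16];
  [:: 1; 7; 14];
  [:: 0; 8; 11];
  [:: 4; 6; 15]];
 [:: [:: 4; 9; 19];
  [:: 2; 14; 18];
  [:: 11; 12; 15];
  [:: 3; 8; 16];
  [:: 5; 7; 10];
  [:: 1; 6; 13]];
 [:: [:: 11; 14; 19];
  [:: 15; 16; 18];
  [:: 7; 8; 12];
  [:: 2; 4; 10];
  [:: 0; 6; 9]];
 [:: [:: 10; 12; 19];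
  [:: 0; 4; 18];
  [:: 2; 3; 13];
  [:: 9; 11; 16];
  [:: 1; 8; 15];
  [:: 5; 6; 14]];
 [:: [:: 6; 16; 19];
  [:: 1; 12; 18];
  [:: 9; 10; 15];
  [:: 5; 8; 13];
  [:: 0; 3; 14];
  [:: 2; 7; 11]];
 [:: [:: 1; 3; 19];
  [:: 5; 11; 18];
  [:: 4; 7; 13];
  [:: 0; 2; 15];
  [:: 6; 8; 10];
  [:: 9; 12; 14]];
 [:: [:: 7; 15; 19];
  [:: 9; 13; 18];
  [:: 1; 2; 16];
  [:: 3; 6; 11];
  [:: 0; 5; 12];
  [:: 4; 8; 14]]]].

Definition res18 : seq (seq (seq nat)) := [:: [:: [:: 0; 1; 11];
  [:: 2; 4; 6];
  [:: 3; 5; 13];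
  [:: 7; 9; 14];
  [:: 8; 10; 12];
  [:: 15; 16; 17]];
 [:: [:: 0; 2; 10];
  [:: 1; 3; 8];
  [:: 4; 11; 15];
  [:: 5; 9; 16];
  [:: 6; 7; 17];
  [:: 12; 13; 14]];
 [:: [:: 0; 3; 6];
  [:: 1; 4; 7];
  [:: 2; 5; 8];
  [:: 9; 13; 17];
  [:: 10; 14; 15];
  [:: 11; 12; 16]];
 [:: [:: 0; 4; 17];
  [:: 1; 5; 15];
  [:: 2; 3; 16];
  [:: 6; 9; 12];
  [:: 7; 10; 13];
  [:: 8; 11; 14]];
 [:: [:: 0; 5; 7];
  [:: 1; 12; 17];
  [:: 2; 13; 15];
  [:: 3; 4; 14];
  [:: 6; 8; 16];
  [:: 9; 10; 11]];
 [:: [:: 0; 8; 13];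
  [:: 1; 6; 14];
  [:: 2; 7; 12];
  [:: 3; 9; 15];
  [:: 4; 10; 16];
  [:: 5; 11; 17]];
 [:: [:: 0; 12; 15];
  [:: 1; 13; 16];
  [:: 2; 14; 17];
  [:: 3; 7; 11];
  [:: 4; 8; 9];
  [:: 5; 6; 10]];
 [:: [:: 0; 14; 16];
  [:: 1; 2; 9];
  [:: 3; 10; 17];
  [:: 4; 5; 12];
  [:: 6; 11; 13];
  [:: 7; 8; 15]]].

Definition res19 : seq (seq (seq nat)) := [:: [:: [:: 2; 9; 10];
  [:: 11; 13; 15];
  [:: 4; 12; 14];
  [:: 0; 5; 16];
  [:: 1; 3; 17];
  [:: 6; 7; 8]];
 [:: [:: 1; 9; 11];
  [:: 10; 12; 17];
  [:: 2; 6; 13];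
  [:: 0; 7; 14];
  [:: 8; 15; 16];
  [:: 3; 4; 5]];
 [:: [:: 9; 12; 15];
  [:: 10; 13; 16];
  [:: 11; 14; 17];
  [:: 0; 4; 8];
  [:: 1; 5; 6];
  [:: 2; 3; 7]];
 [:: [:: 8; 9; 13];
  [:: 6; 10; 14];
  [:: 7; 11; 12];
  [:: 0; 3; 15];
  [:: 1; 4; 16];
  [:: 2; 5; 17]];
 [:: [:: 9; 14; 16];
  [:: 3; 8; 10];
  [:: 4; 6; 11];
  [:: 5; 12; 13];
  [:: 7; 15; 17];
  [:: 0; 1; 2]];
 [:: [:: 4; 9; 17];
  [:: 5; 10; 15];
  [:: 3; 11; 16];
  [:: 0; 6; 12];
  [:: 1; 7; 13];
  [:: 2; 8; 14]];
 [:: [:: 3; 6; 9];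
  [:: 4; 7; 10];
  [:: 5; 8; 11];
  [:: 2; 12; 16];
  [:: 0; 13; 17];
  [:: 1; 14; 15]];
 [:: [:: 5; 7; 9];
  [:: 0; 10; 11];
  [:: 1; 8; 12];
  [:: 3; 13; 14];
  [:: 2; 4; 15];
  [:: 6; 16; 17]]].

Definition sts19 : seq (seq nat) := [:: [:: 0; 1; 18];
  [:: 0; 2; 6];
  [:: 0; 3; 4];
  [:: 0; 5; 7];
  [:: 0; 8; 13];
  [:: 0; 9; 16];
  [:: 0; 10; 17];
  [:: 0; 11; 12];
  [:: 0; 14; 15];
  [:: 1; 2; 3];
  [:: 1; 4; 5];
  [:: 1; 6; 7];
  [:: 1; 8; 15];
  [:: 1; 9; 17];
  [:: 1; 10; 12];
  [:: 1; 11; 13];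
  [:: 1; 14; 16];
  [:: 2; 4; 7];
  [:: 2; 5; 17];
  [:: 2; 8; 12];
  [:: 2; 9; 15];
  [:: 2; 10; 11];
  [:: 2; 13; 16];
  [:: 2; 14; 18];
  [:: 3; 5; 6];
  [:: 3; 7; 18];
  [:: 3; 8; 11];
  [:: 3; 9; 12];
  [:: 3; 10; 15];
  [:: 3; 13; 14];
  [:: 3; 16; 17];
  [:: 4; 6; 17];
  [:: 4; 8; 9];
  [:: 4; 10; 14];
  [:: 4; 11; 16];
  [:: 4; 12; 13];
  [:: 4; 15; 18];
  [:: 5; 8; 16];
  [:: 5; 9; 14];
  [:: 5; 10; 13];
  [:: 5; 11; 18];
  [:: 5; 12; 15];
  [:: 6; 8; 10];
  [:: 6; 9; 11];
  [:: 6; 12; 14];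
  [:: 6; 13; 18];
  [:: 6; 15; 16];
  [:: 7; 8; 14];
  [:: 7; 9; 13];
  [:: 7; 10; 16];
  [:: 7; 11; 15];
  [:: 7; 12; 17];
  [:: 9; 10; 18];
  [:: 11; 14; 17];
  [:: 12; 16; 18];
  [:: 13; 15; 17];
  [:: 8; 17; 18]].

Definition col19 : seq (seq (seq nat)) := [:: [:: [:: 6; 15; 16];
  [:: 1; 10; 12];
  [:: 2; 4; 7];
  [:: 3; 13; 14];
  [:: 8; 17; 18]];
 [:: [:: 1; 14; 16];
  [:: 3; 10; 15];
  [:: 4; 12; 13];
  [:: 6; 9; 11];
  [:: 0; 5; 7]];
 [:: [:: 7; 12; 17];
  [:: 9; 10; 18];
  [:: 1; 4; 5];
  [:: 0; 14; 15];
  [:: 3; 8; 11];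
  [:: 2; 13; 16]];
 [:: [:: 11; 14; 17];
  [:: 4; 15; 18];
  [:: 1; 6; 7];
  [:: 5; 10; 13];
  [:: 2; 8; 12];
  [:: 0; 9; 16]];
 [:: [:: 3; 16; 17];
  [:: 5; 11; 18];
  [:: 0; 2; 6];
  [:: 1; 8; 15];
  [:: 4; 10; 14];
  [:: 7; 9; 13]];
 [:: [:: 2; 5; 17];
  [:: 0; 1; 18];
  [:: 6; 8; 10];
  [:: 4; 11; 16];
  [:: 3; 9; 12]];
 [:: [:: 4; 6; 17];
  [:: 12; 16; 18];
  [:: 7; 11; 15];
  [:: 1; 2; 3];
  [:: 0; 8; 13];
  [:: 5; 9; 14]];
 [:: [:: 1; 9; 17];
  [:: 6; 13; 18];
  [:: 0; 3; 4];
  [:: 7; 8; 14];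
  [:: 5; 12; 15];
  [:: 2; 10; 11]];
 [:: [:: 13; 15; 17];
  [:: 2; 14; 18];
  [:: 7; 10; 16];
  [:: 0; 11; 12];
  [:: 4; 8; 9];
  [:: 3; 5; 6]];
 [:: [:: 0; 10; 17];
  [:: 3; 7; 18];
  [:: 1; 11; 13];
  [:: 2; 9; 15];
  [:: 6; 12; 14];
  [:: 5; 8; 16]]].

Definition dlx (x : nat) : seq (seq nat) :=
  [seq filter (fun y => y != x) l | l <- bsl & x \in l].

Lemma derived_mk n (bs : seq (seq nat)) (x : 'I_n) :
  derived [set:: map (mk n) bs] x =
  [set:: map (mk n) [seq filter (fun y => y != nat_of_ord x) l | l <- bs & nat_of_ord x \in l]].
Proof.
apply/setP => B; rewrite /derived inE; apply/imsetP/mapP.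
  case=> B'; rewrite !inE => /andP [/mapP [l hl ->] xl] ->.
  exists (filter (fun y => y != nat_of_ord x) l); last by rewrite setD1_mk.
  by apply/mapP; exists l => //; rewrite mem_filter -in_mk xl.
case=> l' /mapP [l]; rewrite mem_filter => /andP [xl hl] -> ->.
exists (mk n l); last by rewrite setD1_mk.
by rewrite !inE map_f //= in_mk.
Qed.

Lemma mk_nil n : mk n [::] = set0.
Proof. by apply/setP => i; rewrite !inE. Qed.

Lemma sumn_big (s : seq (seq nat)) (F : seq nat -> nat) :
  \sum_(l <- s) F l = sumn (map F s).
Proof. by rewrite sumnE big_map. Qed.

Lemma sts19_ok : ists_ok 19 (iota 0 19) [::] sts19.
Proof. by vm_compute. Qed.

Lemma col19_ok : col_ok 19 (iota 0 19) sts19 col19.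
Proof. by vm_compute. Qed.

Lemma chi19 : is_chi' 19 10.
Proof.
split; last exact: chi19_lb.
exists [set:: map (mk 19) sts19]; split.
  rewrite /STS setT_mk -(mk_nil 19); exact: ists_okP sts19_ok.
rewrite setT_mk; exact: (colorable_okP col19_ok).
Qed.

Definition tri_in (a b c : nat) (l : seq nat) := [&& a \in l, b \in l & c \in l].

Definition tri_ok (a b c : nat) : bool :=
  if has (fun g => tri_in a b c ([:: 18; 19] ++ g)) gsl
  then count (tri_in a b c) bsl == 0 else count (tri_in a b c) bsl == 1.

Definition I20 := iota 0 20.

Definition tri_chk : bool :=
  all (fun a => all (fun b => all (fun c =>
    [&& a != b, a != c & b != c] ==> tri_ok a b c) I20) I20) I20.

Lemma tri_chk_ok : tri_chk.
Proof. Time (by vm_compute). Qed.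

Definition gc_all (x : nat) (g : seq nat) : bool :=
  let Yl := filter (fun y => y != x) (iota 0 20) in
  let Hl := filter (fun y => y != x) (g ++ [:: 18; 19]) in
  let cls := nth [::] colsl x in
  [&& ists_ok 20 Yl Hl [seq filter (fun y => y != x) l | l <- bsl & x \in l],
      col_ok 20 Yl [seq filter (fun y => y != x) l | l <- bsl & x \in l] cls,
      all (PPCn (filter (fun y => y \notin Hl) Yl)) (take 2 cls),
      size cls == 10, count (fun y => y \in Yl) I20 == 19 &
      count (fun y => y \in Hl) I20 == 3].

Definition gc_chk : bool :=
  all (fun x => all (fun g => (x \in g) ==> gc_all x g) gsl) I20.

Lemma gc_chk_ok : gc_chk.
Proof. Time (by vm_compute). Qed.

Definition Zl := filter (fun y => y \notin [:: 18; 19]) I20.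

Lemma gdd18_ok : gdd_ok 20 [seq y <- iota 0 20 | y \notin [:: 18; 19]] gsl
  [seq filter (fun y => y != 18) l | l <- bsl & 18 \in l] res18.
Proof. Time (by vm_compute). Qed.

Lemma gdd19_ok : gdd_ok 20 [seq y <- iota 0 20 | y \notin [:: 18; 19]] gsl
  [seq filter (fun y => y != 19) l | l <- bsl & 19 \in l] res19.
Proof. Time (by vm_compute). Qed.

Definition misc_chk : bool :=
  [&& [&& uniq gsl, dist_ok 20 gsl, uniq bsl & dist_ok 20 bsl],
      all (fun i => (i \in flatten gsl) == (i \in Zl)) I20,
      sumn (map (fun l => count (fun y => y \in l) I20) gsl) == count (fun y => y \in Zl) I20,
      all (fun l => has (fun y => y < 20) l) gsl &
      [&& all (fun l => count (fun y => y \in l) I20 == 2) gsl, all (fun l => count (fun y => y \in l) I20 == 4) bsl,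
          all (fun l => all (fun y => y < 18) l) gsl &
          count (fun y => y \in [:: 18; 19]) I20 == 2]].

Lemma misc_chk_ok : misc_chk.
Proof. by vm_compute. Qed.

Lemma iota20 (i : 'I_20) : nat_of_ord i \in I20.
Proof. exact: iota_ord. Qed.

Definition S0 : {set 'I_20} := mk 20 [:: 18; 19].
Definition Gs0 : {set {set 'I_20}} := [set:: map (mk 20) gsl].
Definition A0 : {set {set 'I_20}} := [set:: map (mk 20) bsl].

Lemma misc_facts :
  [/\ uniq (map (mk 20) gsl), uniq (map (mk 20) bsl),
      partition Gs0 (~: S0), #|Gs0| = 9 &
      (forall G, G \in Gs0 -> #|G| = 2)].
Proof.
have := misc_chk_ok.
case/and5P => /and4P [m1 m2 m3 m4] m5 m6 m7 /and4P [/allP m8 /allP m9 /allP m10 m11].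
have ug : uniq (map (mk 20) gsl) by apply: uniq_mk.
have ub : uniq (map (mk 20) bsl) by apply: uniq_mk.
split; [exact: ug | exact: ub | | |].
- rewrite /Gs0 /S0 setC_mk; apply: (partition_seq ug).
  + by rewrite bigU_mk; apply/eqP; apply: eq_mk.
  + by rewrite big_map (eq_bigr _ (fun B _ => card_mk 20 B)) sumn_big card_mk.
  + apply/negP => /mapP [l hl] /esym /eqP; apply/negP; apply: mk_neq0.
    exact: (allP m7).
- by rewrite /Gs0 (card_setseq ug) size_map.
- by move=> G; rewrite inE => /mapP [l hl ->]; rewrite card_mk (eqP (m8 l hl)).
Qed.

Lemma cqs_part : CQS 2 9 2 S0 Gs0 A0.
Proof.
have [ug ub hpart hcardG hG] := misc_facts.
have := misc_chk_ok.
case/and5P => /and4P [m1 m2 m3 m4] m5 m6 m7 /and4P [/allP m8 /allP m9 /allP m10 m11].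
split; first by rewrite card_mk (eqP m11).
split; first exact: hpart.
split; first exact: hcardG.
split; first exact: hG.
split.
  by move=> B; rewrite inE => /mapP [l hl ->]; rewrite card_mk (eqP (m9 l hl)).
move=> t /card3_set [a [b [c [hab hac hbc ->]]]].
rewrite /Gs0 /A0 /S0 exists_setseq has_map (card_sep _ ub) count_map.
rewrite (eq_has (a2 := fun g => tri_in (nat_of_ord a) (nat_of_ord b) (nat_of_ord c) ([:: 18; 19] ++ g))); last first.
  by move=> g; rewrite /= setU_mk sub3_mk.
rewrite (eq_count (a2 := tri_in (nat_of_ord a) (nat_of_ord b) (nat_of_ord c))); last first.
  by move=> l; rewrite /= sub3_mk.
have := allP (allP (allP tri_chk_ok _ (iota20 a)) _ (iota20 b)) _ (iota20 c).
rewrite !ordE hab hac hbc !andbT implyTb /tri_ok.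
by case: (has _ gsl) => /eqP.
Qed.

Lemma gc_part : forall G x, G \in Gs0 -> x \in G ->
  gcSTS ([set: 'I_20] :\ x) ((G :|: S0) :\ x) (derived A0 x).
Proof.
move=> G x; rewrite inE => /mapP [g hg ->]; rewrite in_mk => hx.
have := allP (allP gc_chk_ok _ (iota20 x)) g hg; rewrite hx implyTb /gc_all.
case/and5P => h1 h2 h3 /eqP h4 /andP [/eqP h5 /eqP h6].
rewrite /A0 /S0 derived_mk setT_mk setD1_mk setU_mk setD1_mk.
have K := gc_okP _ h1 h2 h3; apply: K.
- by rewrite card_mk h5 h4; exact: chi19.
- by rewrite h4.
- by rewrite !card_mk h5 h6 h4.
Qed.

Lemma rg_part : forall x, x \in S0 -> RGDD (~: S0) Gs0 (derived A0 x) 2 9.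
Proof.
have [ug ub hpart hcardG hG] := misc_facts.
move=> x; rewrite in_mk => hx.
have r18 := gdd18_ok; have r19 := gdd19_ok.
rewrite /A0 /S0 derived_mk setC_mk.
have hp' : partition Gs0 (mk 20 [seq y <- iota 0 20 | y \notin [:: 18; 19]]).
  by rewrite -setC_mk.
move: hx; rewrite !inE => /orP [/eqP -> | /eqP ->].
  have K := rgdd_okP hp' hcardG hG r18; apply: K.
have K := rgdd_okP hp' hcardG hG r19; apply: K.
Qed.

Theorem lemma3p6 :
  exists (S : {set 'I_20}) (Gs : {set {set 'I_20}}) (A : {set {set 'I_20}}),
    cDCQS2 2 9 S Gs A.
Proof.
exists S0, Gs0, A0.
split; [exact: cqs_part | split; [exact: gc_part | exact: rg_part]].
Qed.
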